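(* Let $\mathcal{S}=(\mathbb{Z},\le)$ and for $m\in\mathbb{N}$ let $\mathcal{S}_m$ be the substructure with universe $2\mathbb{Z}\cup(\mathbb{Z}\cap[-2m,2m])$, indexed by $\mathbb{N}$ with its usual order. Then $\lim_{\mathbb{N}}\mathrm{Th}(\mathcal{S}_m^* )=\mathrm{Th}(\mathcal{S}^* )$, while for each $m$, $\mathcal{S}_m$ is not an elementary substructure of $\mathcal{S}$, nor of $\mathcal{S}_k$ for any $k>m$.
   Context: $\mathrm{Th}(\mathcal{T}^* )$ is the set of sentences in the language $\{\le\}$ expanded by a constant for each element of the universe of $\mathcal{T}$ that are true in $\mathcal{T}$; all are regarded as subsets of the set of sentences with constants from $\mathbb{Z}$. For a family $\{\Delta_m\}_{m\in\mathbb{N}}$: $\limsup\Delta_m=\{\theta:\forall n\,\exists m\ge n\,[\theta\in\Delta_m]\}$, $\liminf\Delta_m=\{\theta:\exists n\,\forall m\ge n\,[\theta\in\Delta_m]\}$, and $\lim\Delta_m=\Delta$ means both equal $\Delta$. *)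

(* Defs.v *)
From Stdlib Require Import ZArith.
Open Scope Z_scope.

(* Terms: de Bruijn variables, or constants naming integers. *)
Inductive term : Type :=
| tvar : nat -> term
| tconst : Z -> term.

Inductive formula : Type :=
| Fle : term -> term -> formula
| Feq : term -> term -> formula
| Fbot : formula
| Fneg : formula -> formula
| Fand : formula -> formula -> formula
| For : formula -> formula -> formula
| Fimp : formula -> formula -> formula
| Fex : formula -> formula      (* binds de Bruijn index 0 *)
| Fall : formula -> formula.

(* A structure is a substructure of (Z, <=), given by its universe U. *)
Definition universe := Z -> Prop.

Definition scons (a : Z) (e : nat -> Z) : nat -> Z :=
  fun n => match n with O => a | S k => e k end.

Definition teval (e : nat -> Z) (t : term) : Z :=
  match t with tvar n => e n | tconst z => z end.

Fixpoint sat (U : universe) (e : nat -> Z) (phi : formula) : Prop :=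
  match phi with
  | Fle t1 t2 => teval e t1 <= teval e t2
  | Feq t1 t2 => teval e t1 = teval e t2
  | Fbot => False
  | Fneg p => ~ sat U e p
  | Fand p q => sat U e p /\ sat U e q
  | For p q => sat U e p \/ sat U e q
  | Fimp p q => sat U e p -> sat U e q
  | Fex p => exists a, U a /\ sat U (scons a e) p
  | Fall p => forall a, U a -> sat U (scons a e) p
  end.

Definition tbound (k : nat) (t : term) : Prop :=
  match t with tvar n => (n < k)%nat | tconst _ => True end.

Fixpoint bound (k : nat) (phi : formula) : Prop :=
  match phi with
  | Fle t1 t2 | Feq t1 t2 => tbound k t1 /\ tbound k t2
  | Fbot => True
  | Fneg p => bound k p
  | Fand p q | For p q | Fimp p q => bound k p /\ bound k q
  | Fex p | Fall p => bound (S k) p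
  end.

Definition sentence (phi : formula) : Prop := bound O phi.

Definition tconsts_in (U : universe) (t : term) : Prop :=
  match t with tvar _ => True | tconst z => U z end.

Fixpoint consts_in (U : universe) (phi : formula) : Prop :=
  match phi with
  | Fle t1 t2 | Feq t1 t2 => tconsts_in U t1 /\ tconsts_in U t2
  | Fbot => True
  | Fneg p => consts_in U p
  | Fand p q | For p q | Fimp p q => consts_in U p /\ consts_in U q
  | Fex p | Fall p => consts_in U p
  end.

(* Th of T-star : sentences with constants naming elements of the universe of T,
   true in T.  A subset of the set of all sentences with constants from Z. *)
Definition Th_star (U : universe) (theta : formula) : Prop :=
  sentence theta /\ consts_in U theta /\ sat U (fun _ => 0) theta.

Definition limsup (D : nat -> formula -> Prop) (theta : formula) : Prop :=
  forall n, exists m, (n <= m)%nat /\ D m theta.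

Definition liminf (D : nat -> formula -> Prop) (theta : formula) : Prop :=
  exists n, forall m, (n <= m)%nat -> D m theta.

Definition lim_is (D : nat -> formula -> Prop) (T : formula -> Prop) : Prop :=
  (forall theta, limsup D theta <-> T theta) /\
  (forall theta, liminf D theta <-> T theta).

Definition constfree (phi : formula) : Prop := consts_in (fun _ => False) phi.

Definition elem_substr (A B : universe) : Prop :=
  (forall z, A z -> B z) /\
  forall (phi : formula) (e : nat -> Z),
    constfree phi -> (forall n, A (e n)) -> (sat A e phi <-> sat B e phi).

Definition S_univ : universe := fun _ => True.

Definition S_m (m : nat) : universe :=
  fun z => Z.Even z \/ (- 2 * Z.of_nat m <= z <= 2 * Z.of_nat m).

(* Main.v *)
Require Import Defs.
From Stdlib Require Import ZArith Lia.
Open Scope Z_scope.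

Section Iso.
Variables (U V : universe) (f : Z -> Z) (C : Z -> Prop).
Hypothesis mono : forall x y, U x -> U y -> (x <= y <-> f x <= f y).
Hypothesis maps : forall x, U x -> V (f x).
Hypothesis surj : forall b, V b -> exists a, U a /\ f a = b.
Hypothesis HC : forall c, C c -> U c /\ f c = c.

Lemma teval_iso e e' t : tconsts_in C t -> (forall n, U (e n)) ->
  (forall n, e' n = f (e n)) -> U (teval e t) /\ teval e' t = f (teval e t).
Proof.
  destruct t; simpl; intros Ht He He'; auto.
  destruct (HC z Ht); split; auto.
Qed.

Lemma sat_iso phi : forall e e', consts_in C phi -> (forall n, U (e n)) ->
  (forall n, e' n = f (e n)) -> (sat U e phi <-> sat V e' phi).
Proof.
  induction phi; simpl; intros e e' Hc He He'.
  - destruct Hc as [H1 H2].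
    destruct (teval_iso e e' t H1 He He') as [U1 E1].
    destruct (teval_iso e e' t0 H2 He He') as [U2 E2].
    rewrite E1, E2. apply mono; auto.
  - destruct Hc as [H1 H2].
    destruct (teval_iso e e' t H1 He He') as [U1 E1].
    destruct (teval_iso e e' t0 H2 He He') as [U2 E2].
    rewrite E1, E2.
    pose proof (mono _ _ U1 U2). pose proof (mono _ _ U2 U1).
    split; intro Hq; [rewrite Hq; reflexivity|].
    apply Z.le_antisymm; [apply H|apply H0]; lia.
  - tauto.
  - rewrite (IHphi e e'); tauto.
  - destruct Hc. rewrite (IHphi1 e e'), (IHphi2 e e'); tauto.
  - destruct Hc. rewrite (IHphi1 e e'), (IHphi2 e e'); tauto.
  - destruct Hc. rewrite (IHphi1 e e'), (IHphi2 e e'); tauto.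
  - assert (Hs : forall a, U a -> (sat U (scons a e) phi <-> sat V (scons (f a) e') phi)).
    { intros a Ua. apply IHphi; auto; intros [|n]; simpl; auto. }
    split.
    + intros [a [Ua H]]. exists (f a). split; auto. apply Hs; auto.
    + intros [b [Vb H]]. destruct (surj b Vb) as [a [Ua <-]].
      exists a. split; auto. apply Hs; auto.
  - assert (Hs : forall a, U a -> (sat U (scons a e) phi <-> sat V (scons (f a) e') phi)).
    { intros a Ua. apply IHphi; auto; intros [|n]; simpl; auto. }
    split.
    + intros H b Vb. destruct (surj b Vb) as [a [Ua <-]]. apply Hs; auto.
    + intros H a Ua. apply Hs; auto.
Qed.
End Iso.

Definition tcb (t : term) : Z := match t with tvar _ => 0 | tconst z => Z.abs z end.
Fixpoint cb (phi : formula) : Z :=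
  match phi with
  | Fle t1 t2 | Feq t1 t2 => Z.max (tcb t1) (tcb t2)
  | Fbot => 0
  | Fneg p => cb p
  | Fand p q | For p q | Fimp p q => Z.max (cb p) (cb q)
  | Fex p | Fall p => cb p
  end.

Lemma cb_consts (P : Z -> Prop) phi :
  (forall c, Z.abs c <= cb phi -> P c) -> consts_in P phi.
Proof.
  induction phi; simpl; intros H; try tauto;
  try (split; [apply IHphi1|apply IHphi2]; intros c Hc; apply H; lia);
  try (apply IHphi; auto);
  (split; [destruct t|destruct t0]; simpl in *; auto; apply H; lia).
Qed.

Definition fm (m : nat) (z : Z) : Z :=
  let M := Z.of_nat m in
  if Z_lt_le_dec (2 * M) z then M + z / 2
  else if Z_lt_le_dec z (-2 * M) then - M + z / 2 else z.

Lemma fm_mono m x y : S_m m x -> S_m m y -> (x <= y <-> fm m x <= fm m y).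
Proof.
  unfold S_m, fm. intros Hx Hy.
  destruct (Z_lt_le_dec (2 * Z.of_nat m) x);
  [|destruct (Z_lt_le_dec x (-2 * Z.of_nat m))];
  (destruct (Z_lt_le_dec (2 * Z.of_nat m) y);
  [|destruct (Z_lt_le_dec y (-2 * Z.of_nat m))]);
  destruct Hx as [[kx ->]|Hx]; destruct Hy as [[ky ->]|Hy];
  try lia; Z.div_mod_to_equations; lia.
Qed.

Lemma fm_surj m b : exists a, S_m m a /\ fm m a = b.
Proof.
  unfold S_m, fm.
  destruct (Z_lt_le_dec (2 * Z.of_nat m) b).
  - exists (2 * b - 2 * Z.of_nat m). split.
    + left. exists (b - Z.of_nat m). lia.
    + destruct (Z_lt_le_dec (2 * Z.of_nat m) (2 * b - 2 * Z.of_nat m)); [|lia].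
      Z.div_mod_to_equations; lia.
  - destruct (Z_lt_le_dec b (-2 * Z.of_nat m)).
    + exists (2 * b + 2 * Z.of_nat m). split.
      * left. exists (b + Z.of_nat m). lia.
      * destruct (Z_lt_le_dec (2 * Z.of_nat m) (2 * b + 2 * Z.of_nat m)); [lia|].
        destruct (Z_lt_le_dec (2 * b + 2 * Z.of_nat m) (-2 * Z.of_nat m)); [|lia].
        Z.div_mod_to_equations; lia.
    + exists b. split; [right; lia|].
      destruct (Z_lt_le_dec (2 * Z.of_nat m) b); [lia|].
      destruct (Z_lt_le_dec b (-2 * Z.of_nat m)); [lia|]. reflexivity.
Qed.

Lemma key theta m : (Z.to_nat (cb theta) <= m)%nat ->
  (Th_star (S_m m) theta <-> Th_star S_univ theta).
Proof.
  intros Hm. unfold Th_star.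
  assert (HCi : consts_in (fun c => - 2 * Z.of_nat m <= c <= 2 * Z.of_nat m) theta).
  { apply cb_consts. intros c Hc. lia. }
  assert (Hsat : sat (S_m m) (fun _ => 0) theta <-> sat S_univ (fun _ => 0) theta).
  { apply (sat_iso (S_m m) S_univ (fm m) (fun c => - 2 * Z.of_nat m <= c <= 2 * Z.of_nat m)).
    - apply fm_mono.
    - intros; exact I.
    - intros b _. exact (fm_surj m b).
    - intros c Hc. split; [right; exact Hc|]. unfold fm.
      destruct (Z_lt_le_dec (2 * Z.of_nat m) c); [lia|].
      destruct (Z_lt_le_dec c (-2 * Z.of_nat m)); [lia|]. reflexivity.
    - exact HCi.
    - intros; left; exists 0; lia.
    - intros n. unfold fm.
      destruct (Z_lt_le_dec (2 * Z.of_nat m) 0); [lia|].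
      destruct (Z_lt_le_dec 0 (-2 * Z.of_nat m)); [lia|]. reflexivity. }
  assert (Hc1 : consts_in (S_m m) theta).
  { apply cb_consts. intros c Hc. right. lia. }
  assert (Hc2 : consts_in S_univ theta).
  { apply cb_consts. intros; exact I. }
  tauto.
Qed.

Definition btw : formula :=
  Fex (Fand (Fand (Fle (tvar 1) (tvar 0)) (Fneg (Feq (tvar 1) (tvar 0))))
            (Fand (Fle (tvar 0) (tvar 2)) (Fneg (Feq (tvar 0) (tvar 2))))).

Definition env (m : nat) : nat -> Z :=
  fun n => match n with O => 2 * Z.of_nat m | _ => 2 * Z.of_nat m + 2 end.

Lemma btw_cf : constfree btw.
Proof. unfold constfree, btw; simpl; tauto. Qed.

Lemma env_in m n : S_m m (env m n).
Proof. left. unfold env. destruct n; [exists (Z.of_nat m)|exists (Z.of_nat m + 1)]; lia. Qed.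

Lemma not_btw m : ~ sat (S_m m) (env m) btw.
Proof.
  unfold btw; cbn [sat]. intros [a [[[k Hk]|Ha] [[H1 H2] [H3 H4]]]]; cbv [scons env teval] in *; lia.
Qed.

Lemma btw_in (B : universe) m : B (2 * Z.of_nat m + 1) -> sat B (env m) btw.
Proof.
  intros HB. unfold btw; cbn [sat]. exists (2 * Z.of_nat m + 1). split; auto.
  cbv [scons env teval]; lia.
Qed.

Lemma not_elem m B : B (2 * Z.of_nat m + 1) -> ~ elem_substr (S_m m) B.
Proof.
  intros HB [_ H]. apply (not_btw m).
  apply (H btw (env m) btw_cf (env_in m)). apply btw_in; auto.
Qed.

Theorem mainTheorem8 :
  lim_is (fun m => Th_star (S_m m)) (Th_star S_univ) /\
  (forall m : nat,
     ~ elem_substr (S_m m) S_univ /\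
     (forall k : nat, (m < k)%nat -> ~ elem_substr (S_m m) (S_m k))).
Proof.
  split.
  - split; intro theta; split.
    + intros H. destruct (H (Z.to_nat (cb theta))) as [m [Hm Ht]].
      apply (key theta m Hm); auto.
    + intros H n. exists (Nat.max n (Z.to_nat (cb theta))). split; [lia|].
      apply key; [lia|auto].
    + intros [n H]. apply (key theta (Nat.max n (Z.to_nat (cb theta)))); [lia|].
      apply H; lia.
    + intros H. exists (Z.to_nat (cb theta)). intros m Hm. apply key; auto.
  - intros m. split.
    + apply not_elem. exact I.
    + intros k Hk. apply not_elem. right. lia.
Qed.
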